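(* Assume no treatment anticipation, missingness as an absorbing state, random sampling, and Principal Parallel Trends: $$\mathbb{E}[Y_{i2}(0)-Y_{i1}\mid G_i=1,V_i=AO]=\mathbb{E}[Y_{i2}(0)-Y_{i1}\mid G_i=0,V_i=AO].$$ Assume moreover that, conditional on $S_{i2}=1$ and $G_i=g$ ($g\in\{0,1\}$), $\ddot Y_i$ is continuously distributed with finite mean, and that $\pi_1,\pi_0\in(0,1]$ are known. Define $$\Delta^{LB}=\mathbb{E}[\ddot Y_i\mid G_i=1,S_{i2}=1,\ddot Y_i\le \ddot y^1_{\pi_1}]-\mathbb{E}[\ddot Y_i\mid G_i=0,S_{i2}=1,\ddot Y_i\ge \ddot y^0_{1-\pi_0}],$$ $$\Delta^{UB}=\mathbb{E}[\ddot Y_i\mid G_i=1,S_{i2}=1,\ddot Y_i\ge \ddot y^1_{1-\pi_1}]-\mathbb{E}[\ddot Y_i\mid G_i=0,S_{i2}=1,\ddot Y_i\le \ddot y^0_{\pi_0}].$$ Then $$\Delta^{LB}\le \mathrm{ATT}_{AO}\le\Delta^{UB}.$$ Moreover, these bounds are sharp: they are the tightest bounds on $\mathrm{ATT}_{AO}$ that are compatible with the assumptions and the distribution of the observed data.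
   Context: Setting (two groups, two periods). Units $i$ are observed in periods $t\in\{1,2\}$. $G_i\in\{0,1\}$ indicates that unit $i$ is treated in period 2; nobody is treated in period 1. Under SUTVA, each unit has potential outcomes $Y_{i2}(1),Y_{i2}(0)$ and potential selection indicators $S_{i2}(1),S_{i2}(0)\in\{0,1\}$. Here $S=1$ means the outcome is observed and well-defined. The observed quantities are $Y_{i2}=G_iY_{i2}(1)+(1-G_i)Y_{i2}(0)$ and $S_{i2}=G_iS_{i2}(1)+(1-G_i)S_{i2}(0)$. No treatment anticipation: the period-1 outcome $Y_{i1}$ and selection $S_{i1}$ do not depend on the period-2 treatment, so they are common to both treatment regimes. In particular $Y_{i1}=Y_{i1}(0)$. Missingness is absorbing: $S_{i1}=0\Rightarrow S_{i2}=0$, also for both potential selection indicators. Random sampling: $\{Y_{i1},Y_{i2},S_{i1},S_{i2},G_i\}_{i=1}^N$ are i.i.d. Principal strata: $V_i$ is the stratum defined by $(S_{i2}(0),S_{i2}(1))$. The strata are - $AO$ (Always-Observed): $(1,1)$; - $NO$ (Never-Observed): $(0,0)$; - $OC$ (observed only in control): $(1,0)$; - $OT$ (observed only in treatment): $(0,1)$. The target estimand is $\mathrm{ATT}_{AO}=\mathbb{E}[Y_{i2}(1)-Y_{i2}(0)\mid G_i=1,V_i=AO]$. Further notation: - $\ddot Y_i=Y_{i2}-Y_{i1}$. - $\ddot y^g_q=F^{-1}(q)$, where $F$ is the c.d.f. of $\ddot Y$ conditional on $S_2=1,G=g$. - $\pi_1=\Pr(S_{i2}(0)=1\mid G_i=1,S_{i2}(1)=1)$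 and $\pi_0=\Pr(S_{i2}(1)=1\mid G_i=0,S_{i2}(0)=1)$. These are the proportions of Always-Observed units among the units observed in period 2 in the treatment and control group, respectively. *)

(* Defs.v *)
From HB Require Import structures.
From mathcomp Require Import all_boot all_order all_algebra.
From mathcomp Require Import all_classical all_reals all_analysis.
Set Implicit Arguments. Unset Strict Implicit. Unset Printing Implicit Defensive.
Import Order.TTheory GRing.Theory Num.Theory.
Import numFieldNormedType.Exports.
Local Open Scope classical_set_scope.
Local Open Scope ring_scope.

Section DiD.
Context {R : realType} {d : measure_display} {T : measurableType d}.
Variable P : probability T R.

Definition cprob (A B : set T) : R := fine (P (A `&` B)) / fine (P B).

Definition cexp (X : T -> R) (A : set T) : R :=
  fine (\int[P]_(w in A) (X w)%:E) / fine (P A).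

Definition grp (G : set T) (g : bool) : set T := if g then G else ~` G.

Definition obsY2 (G : set T) (Y20 Y21 : T -> R) : T -> R :=
  fun w => \1_G w * Y21 w + (1 - \1_G w) * Y20 w.

Definition obsS2 (G S20 S21 : set T) : set T :=
  (G `&` S21) `|` (~` G `&` S20).

Definition AO (S20 S21 : set T) : set T := S20 `&` S21.

Definition Ydd (G : set T) (Y1 Y20 Y21 : T -> R) : T -> R :=
  fun w => obsY2 G Y20 Y21 w - Y1 w.

Definition ccdf (X : T -> R) (A : set T) (y : R) : R :=
  cprob [set w | X w <= y] A.

(* generalized inverse F^{-1}(q) = inf {y | q <= F y}, in the extended reals
   (it is -oo for q = 0 and may be +oo for q = 1). *)
Definition quantile (F : R -> R) (q : R) : \bar R :=
  ereal_inf (EFin @` [set y | q <= F y]).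

Definition pi1 (G S20 S21 : set T) : R := cprob S20 (G `&` S21).
Definition pi0 (G S20 S21 : set T) : R := cprob S21 (~` G `&` S20).

Definition ATT_AO (G S20 S21 : set T) (Y20 Y21 : T -> R) : R :=
  cexp (fun w => Y21 w - Y20 w) (G `&` AO S20 S21).

Definition Fdd (G S20 S21 : set T) (Y1 Y20 Y21 : T -> R) (g : bool) : R -> R :=
  ccdf (Ydd G Y1 Y20 Y21) (obsS2 G S20 S21 `&` grp G g).

Definition DeltaLB (G S20 S21 : set T) (Y1 Y20 Y21 : T -> R) : R :=
  let Y := Ydd G Y1 Y20 Y21 in
  let S2 := obsS2 G S20 S21 in
  cexp Y (G `&` S2 `&`
          [set w | ((Y w)%:E <= quantile (Fdd G S20 S21 Y1 Y20 Y21 true)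
                                          (pi1 G S20 S21))%E])
  - cexp Y (~` G `&` S2 `&`
          [set w | (quantile (Fdd G S20 S21 Y1 Y20 Y21 false)
                             (1 - pi0 G S20 S21) <= (Y w)%:E)%E]).

Definition DeltaUB (G S20 S21 : set T) (Y1 Y20 Y21 : T -> R) : R :=
  let Y := Ydd G Y1 Y20 Y21 in
  let S2 := obsS2 G S20 S21 in
  cexp Y (G `&` S2 `&`
          [set w | (quantile (Fdd G S20 S21 Y1 Y20 Y21 true)
                             (1 - pi1 G S20 S21) <= (Y w)%:E)%E])
  - cexp Y (~` G `&` S2 `&`
          [set w | ((Y w)%:E <= quantile (Fdd G S20 S21 Y1 Y20 Y21 false)
                                          (pi0 G S20 S21))%E]).

(* All assumptions of the proposition, for a model of a single (generic) unit:
   treatment G, period-1 selection S1 and outcome Y1 (no anticipation: these are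
   common to both regimes), potential selections S20 S21, potential outcomes
   Y20 Y21. *)
Definition model_ok (G S1 S20 S21 : set T) (Y1 Y20 Y21 : T -> R) : Prop :=
  [/\
      [/\ measurable G, measurable S1, measurable S20 & measurable S21] /\
      [/\ measurable_fun setT Y1, measurable_fun setT Y20
        & measurable_fun setT Y21],
      (forall w, ~ S1 w -> ~ S20 w /\ ~ S21 w),
      [/\ P.-integrable (G `&` AO S20 S21) (fun w => (Y20 w - Y1 w)%:E),
          P.-integrable (~` G `&` AO S20 S21) (fun w => (Y20 w - Y1 w)%:E)
        & (cexp (fun w => Y20 w - Y1 w) (G `&` AO S20 S21)
           = cexp (fun w => Y20 w - Y1 w) (~` G `&` AO S20 S21))],
      (* conditional on S_2 = 1, G = g: Ydd is continuously distributed with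
         finite mean (and the conditioning event has positive probability) *)
      (forall g : bool,
        [/\ 0 < fine (P (obsS2 G S20 S21 `&` grp G g)),
            continuous (Fdd G S20 S21 Y1 Y20 Y21 g)
          & P.-integrable (obsS2 G S20 S21 `&` grp G g)
              (fun w => (Ydd G Y1 Y20 Y21 w)%:E)]) &
      (0 < pi1 G S20 S21 <= 1) /\ (0 < pi0 G S20 S21 <= 1)].

Definition compatible (G S1 : set T) (Y1 : T -> R)
    (S20 S21 : set T) (Y20 Y21 : T -> R)
    (S20' S21' : set T) (Y20' Y21' : T -> R) : Prop :=
  [/\ model_ok G S1 S20' S21' Y1 Y20' Y21',
      obsS2 G S20' S21' = obsS2 G S20 S21,
      obsY2 G Y20' Y21' = obsY2 G Y20 Y21,
      pi1 G S20' S21' = pi1 G S20 S21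
    & (pi0 G S20' S21' = pi0 G S20 S21)].

End DiD.

(* Main.v *)
Require Import Defs.
From HB Require Import structures.
From mathcomp Require Import all_boot all_order all_algebra.
From mathcomp Require Import all_classical all_reals all_analysis.
From mathcomp Require Import ring lra measurable_realfun.
Import Order.TTheory GRing.Theory Num.Theory.
Import numFieldNormedType.Exports.
Local Open Scope classical_set_scope.
Local Open Scope ring_scope.
Section Aux.
Context {R : realType} {d : measure_display} {T : measurableType d}.
Context (P : probability T R).

Lemma Pfin {A : set T} : measurable A -> P A \is a fin_num.
Proof. by move=> mA; apply: fin_num_measure. Qed.

Lemma PE {A : set T} : measurable A -> P A = (fine (P A))%:E.
Proof. by move=> mA; rewrite fineK // Pfin. Qed.

Lemma m_ge0 (A : set T) : 0 <= fine (P A).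
Proof. by apply: fine_ge0; apply: measure_ge0. Qed.

Lemma m_le {A B : set T} : measurable A -> measurable B -> A `<=` B ->
  fine (P A) <= fine (P B).
Proof.
move=> mA mB AB; rewrite -lee_fin -!PE //.
by apply: le_measure => //; rewrite inE.
Qed.

Lemma mU {A B : set T} : measurable A -> measurable B -> A `&` B = set0 ->
  fine (P (A `|` B)) = fine (P A) + fine (P B).
Proof.
move=> mA mB AB; rewrite measureU // fineD //; exact: Pfin.
Qed.

Lemma mD {A B : set T} : measurable A -> measurable B ->
  fine (P A) = fine (P (A `\` B)) + fine (P (A `&` B)).
Proof.
move=> mA mB; rewrite -mU.
- by rewrite setDE -setIUr setUCl setIT.
- exact: measurableD.
- exact: measurableI.
- by rewrite setDE setIACA setICl setI0.
Qed.


Lemma intsplit (Y : T -> R) (A C : set T) : measurable A -> measurable C ->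
  measurable_fun setT Y ->
  (\int[P]_(x in A) (Y x)%:E = \int[P]_(x in A `&` C) (Y x)%:E
      + \int[P]_(x in A `\` C) (Y x)%:E)%E.
Proof.
move=> mA mC mY.
have E : A = (A `&` C) `|` (A `\` C) by rewrite setDE -setIUr setUCr setIT.
rewrite {1}E integral_setU //.
- exact: measurableI.
- exact: measurableD.
- by apply/measurable_EFinP; apply: measurable_funS mY.
- by apply/disj_set2P; rewrite setDE setIACA setICr setI0.
Qed.

Lemma trim_le (Y : T -> R) (B A L : set T) (t : \bar R) :
  measurable B -> A `<=` B -> L `<=` B ->
  P.-integrable B (fun w => (Y w)%:E) ->
  measurable A -> measurable L -> measurable_fun setT Y ->
  P A = P L ->
  (forall w, L w -> ~ A w -> ((Y w)%:E <= t)%E) ->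
  (forall w, A w -> ~ L w -> (t <= (Y w)%:E)%E) ->
  (\int[P]_(x in L `\` A) (Y x)%:E <= \int[P]_(x in A `\` L) (Y x)%:E)%E.
Proof.
move=> mB AB LB intY mA mL mY PAL H1 H2.
have mLA : measurable (L `\` A) by exact: measurableD.
have mAL : measurable (A `\` L) by exact: measurableD.
have meq : P (L `\` A) = P (A `\` L).
  rewrite (PE mLA) (PE mAL); congr EFin.
  have h1 := mD mL mA; have h2 := mD mA mL; rewrite setIC in h2.
  rewrite (PE mA) (PE mL) in PAL; case: PAL => e; lra.
have mYf : forall D, measurable_fun D ((EFin \o Y) : T -> \bar R).
  by move=> D; apply/measurable_EFinP; apply: measurable_funS mY.
case: t H1 H2 => [r| |] H1 H2.
- have h1 : (\int[P]_(x in L `\` A) (Y x)%:E <= \int[P]_(x in L `\` A) (EFin \o cst r) x)%E.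
    apply: le_integral => //.
    + apply: integrableS intY => //; by move=> w [/LB].
    + exact: finite_measure_integrable_cst.
    + move=> w; rewrite inE => -[Lw nAw] /=; exact: (H1 w Lw nAw).
  have h2 : (\int[P]_(x in A `\` L) (EFin \o cst r) x <= \int[P]_(x in A `\` L) (Y x)%:E)%E.
    apply: le_integral => //.
    + exact: finite_measure_integrable_cst.
    + apply: integrableS intY => //; by move=> w [/AB].
    + move=> w; rewrite inE => -[Aw nLw] /=; exact: (H2 w Aw nLw).
  apply: (le_trans h1); apply: le_trans h2.
  rewrite (_ : (EFin \o cst r) = cst r%:E) // !integral_cst //.
  by rewrite le_eqVlt; apply/orP; left; apply/eqP; f_equal; exact: meq.
- have E : A `\` L = set0.
    by apply/seteqP; split => // w [Aw nLw]; have := H2 w Aw nLw; rewrite leye_eq.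
  have E2 : P (L `\` A) = 0 by rewrite meq E measure0.
  by rewrite E integral_set0 null_set_integral.
- have E : L `\` A = set0.
    by apply/seteqP; split => // w [Lw nAw]; have := H1 w Lw nAw; rewrite leeNy_eq.
  have E2 : P (A `\` L) = 0 by rewrite -meq E measure0.
  by rewrite E integral_set0 null_set_integral.
Qed.

Lemma trim_cexp (Y : T -> R) (B A L : set T) (t : \bar R) :
  measurable B -> A `<=` B -> L `<=` B ->
  P.-integrable B (fun w => (Y w)%:E) ->
  measurable A -> measurable L -> measurable_fun setT Y ->
  P A = P L ->
  (forall w, L w -> ~ A w -> ((Y w)%:E <= t)%E) ->
  (forall w, A w -> ~ L w -> (t <= (Y w)%:E)%E) ->
  cexp P Y L <= cexp P Y A.
Proof.
move=> mB AB LB intY mA mL mY PAL H1 H2.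
rewrite /cexp -PAL; apply: ler_wpM2r; first by rewrite invr_ge0 m_ge0.
apply: fine_le.
- apply: integrable_fin_num => //; exact: integrableS intY.
- apply: integrable_fin_num => //; exact: integrableS intY.
rewrite (intsplit _ _ _ mL mA mY) (intsplit _ _ _ mA mL mY) setIC.
apply: leeD2l; exact: (@trim_le Y B A L t mB AB LB intY mA mL mY PAL H1 H2).
Qed.

End Aux.
Lemma cont_delta {R : realType} (F : R -> R) x e : continuous F -> 0 < e ->
  exists2 del, 0 < del & forall y, `|x - y| < del -> `|F x - F y| < e.
Proof.
move=> cF e0; have := cF x; move/cvgrPdist_lt/(_ e e0) => /nbhs_ballP [del /= del0 H].
by exists del => // y xy; apply: H.
Qed.

Lemma quantile_fin {R : realType} (F : R -> R) p r :
  continuous F -> quantile F p = r%:E -> F r = p.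
Proof.
move=> cF qr.
have lb : forall y, p <= F y -> r <= y.
  move=> y py; rewrite -lee_fin -qr; apply: ereal_inf_lbound; by exists y.
apply/eqP; rewrite eq_le; apply/andP; split; rewrite leNgt; apply/negP => H.
-
  have e0 : 0 < F r - p by rewrite subr_gt0.
  have [del del0 Hd] := @cont_delta _ F r _ cF e0.
  have := lb (r - del / 2).
  have -> : p <= F (r - del / 2).
    have := Hd (r - del / 2).
    have -> : `|r - (r - del / 2)| < del.
      rewrite opprB addrC subrK ger0_norm; last by rewrite divr_ge0 // ltW.
      lra.
    move=> /(_ isT) h.
    have := ler_norm (F r - F (r - del / 2)).
    lra.
  move=> /(_ isT); lra.
-
  have e0 : 0 < p - F r by rewrite subr_gt0.
  have [del del0 Hd] := @cont_delta _ F r _ cF e0.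
  have : (ereal_inf (EFin @` [set y | (p <= F y)%R]) < (r + del)%:E)%E.
    by rewrite -/(quantile F p) qr lte_fin; lra.
  move=> /ereal_inf_lt [_ [y /= py <-]]; rewrite lte_fin => yr.
  have ry := lb y py.
  have := Hd y.
  have -> : `|r - y| < del.
    rewrite distrC ger0_norm; lra.
  move=> /(_ isT) h.
  have := ler_norm (F y - F r); rewrite distrC. lra.
Qed.

Lemma quantile_y {R : realType} (F : R -> R) p :
  quantile F p = +oo%E -> forall y, F y < p.
Proof.
move=> q y; rewrite ltNge; apply/negP => py.
have : (quantile F p <= y%:E)%E by apply: ereal_inf_lbound; exists y.
by rewrite q leye_eq.
Qed.

Lemma quantile_Ny {R : realType} (F : R -> R) p :
  (forall x y, x <= y -> F x <= F y) ->
  quantile F p = -oo%E -> forall y, p <= F y.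
Proof.
move=> mon q y0; rewrite leNgt; apply/negP => py.
have : (y0%:E <= quantile F p)%E.
  apply: le_ereal_inf_tmp => _ [y /= Fy <-]; rewrite lee_fin.
  rewrite leNgt; apply/negP => yy0.
  have := mon _ _ (ltW yy0); lra.
by rewrite q leeNy_eq.
Qed.

Section Aux3.
Context {R : realType} {d : measure_display} {T : measurableType d}.

Lemma mleR (Y : T -> R) r : measurable_fun setT Y ->
  measurable [set w | Y w <= r].
Proof.
move=> mY; have := mY measurableT _ (measurable_itv `]-oo, r]).
rewrite setTI; congr measurable; apply/seteqP; split => w /=;
  by rewrite in_itv /=.
Qed.

Lemma mgeR (Y : T -> R) r : measurable_fun setT Y ->
  measurable [set w | r <= Y w].
Proof.
move=> mY; have := mY measurableT _ (measurable_itv `[r, +oo[).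
rewrite setTI; congr measurable; apply/seteqP; split => w /=;
  by rewrite in_itv /= andbT.
Qed.

Lemma mle (Y : T -> R) (q : \bar R) : measurable_fun setT Y ->
  measurable [set w | ((Y w)%:E <= q)%E].
Proof.
move=> mY; case: q => [r| |].
- exact: mleR.
- by rewrite (_ : [set _ | _] = setT) //; apply/seteqP; split => w //= _; rewrite leey.
- by rewrite (_ : [set _ | _] = set0) //; apply/seteqP; split => w //=; rewrite leeNy_eq.
Qed.

Lemma mge (Y : T -> R) (q : \bar R) : measurable_fun setT Y ->
  measurable [set w | (q <= (Y w)%:E)%E].
Proof.
move=> mY; case: q => [r| |].
- exact: mgeR.
- by rewrite (_ : [set _ | _] = set0) //; apply/seteqP; split => w //=; rewrite leye_eq.
- by rewrite (_ : [set _ | _] = setT) //; apply/seteqP; split => w //= _; rewrite leNye.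
Qed.

End Aux3.

Section Aux4.
Context {R : realType} {d : measure_display} {T : measurableType d}.
Context (P : probability T R).

Lemma ccdf_mono (Y : T -> R) B : measurable B -> measurable_fun setT Y ->
  forall x y, x <= y -> Defs.ccdf P Y B x <= Defs.ccdf P Y B y.
Proof.
move=> mB mY x y xy; rewrite /Defs.ccdf /cprob; apply: ler_wpM2r; first by rewrite invr_ge0 m_ge0.
apply: m_le.
- by apply: measurableI => //; exact: mleR.
- by apply: measurableI => //; exact: mleR.
- by move=> w [/= Yx Bw]; split => //=; apply: le_trans xy.
Qed.

Lemma ccdf_tail0 (Y : T -> R) B : measurable B -> measurable_fun setT Y ->
  0 < fine (P B) -> forall p, 0 < p -> exists y, Defs.ccdf P Y B y < p.
Proof.
move=> mB mY PB p p0.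
pose Fn := fun n : nat => [set w | Y w <= - n%:R] `&` B.
have mF : forall n, measurable (Fn n).
  by move=> n; apply: measurableI => //; exact: mleR.
have cap0 : \bigcap_n Fn n = set0.
  apply/seteqP; split => // w /= H.
  have := H (Num.Def.archi_bound `|Y w|) Logic.I => -[/= h _].
  have := archi_boundP (normr_ge0 (Y w)).
  have := ler_norm (- Y w); rewrite normrN.
  lra.
have := @nonincreasing_cvg_mu _ _ _ P Fn.
rewrite cap0 measure0 => /(_ _ mF measurable0).
have hom : {homo Fn : n m / (n <= m)%N >-> (m <= n)%O}.
  move=> n m nm; rewrite subsetEset => w [/= h Bw]; split => //=.
  by apply: le_trans h _; rewrite lerN2 ler_nat.
have fin0 : (P (Fn 0%N) < +oo)%E by rewrite (PE P (mF 0%N)) ltry.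
move=> /(_ fin0 hom).
move/fine_cvgP => [_ /cvgrPdist_lt].
have e0 : 0 < p * fine (P B) by rewrite mulr_gt0.
move=> /(_ _ e0) [N _ HN].
have := HN N (leqnn N); rewrite /= sub0r normrN ger0_norm ?m_ge0 // => h.
exists (- N%:R); rewrite /Defs.ccdf /cprob ltr_pdivrMr //.
Qed.

Lemma ccdf_tail1 (Y : T -> R) B : measurable B -> measurable_fun setT Y ->
  0 < fine (P B) -> forall p, p < 1 -> exists y, p <= Defs.ccdf P Y B y.
Proof.
move=> mB mY PB p p1.
pose Fn := fun n : nat => [set w | Y w <= n%:R] `&` B.
have mF : forall n, measurable (Fn n).
  by move=> n; apply: measurableI => //; exact: mleR.
have cupB : \bigcup_n Fn n = B.
  apply/seteqP; split => w /=; first by move=> [n _ []].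
  move=> Bw; exists (Num.Def.archi_bound `|Y w|) => //; split => //=.
  have := archi_boundP (normr_ge0 (Y w)).
  have := ler_norm (Y w).
  lra.
have := @nondecreasing_cvg_mu _ _ _ P Fn.
rewrite cupB => /(_ mF mB).
have hom : {homo Fn : n m / (n <= m)%N >-> (n <= m)%O}.
  move=> n m nm; rewrite subsetEset => w [/= h Bw]; split => //=.
  by apply: le_trans h _; rewrite ler_nat.
move=> /(_ hom) cv.
have : (P \o Fn) x @[x --> \oo] --> (fine (P B))%:E by rewrite -(PE P mB); exact: cv.
move/fine_cvgP => [_ /cvgrPdist_lt].
have e0 : 0 < (1 - p) * fine (P B) by rewrite mulr_gt0 // subr_gt0.
move=> /(_ _ e0) [N _ HN].
have := HN N (leqnn N) => /= h.
have := ler_norm (fine (P B) - fine (P (Fn N))).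
exists N%:R; rewrite /Defs.ccdf /cprob ler_pdivlMr //.
rewrite -/(Fn N); nra.
Qed.

End Aux4.

Section Aux5.
Context {R : realType} {d : measure_display} {T : measurableType d}.
Context (P : probability T R).

Lemma ccdfE (Y : T -> R) B r : 0 < fine (P B) ->
  fine (P ([set w | Y w <= r] `&` B)) = Defs.ccdf P Y B r * fine (P B).
Proof.
by move=> PB; rewrite /Defs.ccdf /cprob divfK // gt_eqF.
Qed.

Lemma QL (Y : T -> R) B p : measurable B -> measurable_fun setT Y ->
  0 < fine (P B) -> continuous (Defs.ccdf P Y B) -> 0 < p <= 1 ->
  fine (P (B `&` [set w | ((Y w)%:E <= quantile (Defs.ccdf P Y B) p)%E]))
  = p * fine (P B).
Proof.
move=> mB mY PB cF /andP[p0 p1].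
case E: (quantile (Defs.ccdf P Y B) p) => [r| |].
- have Fr := @quantile_fin _ _ _ _ cF E.
  by rewrite -Fr -ccdfE // setIC.
- have H := @quantile_y _ _ _ E.
  have p1' : p = 1.
    apply/eqP; rewrite eq_le p1 /= leNgt; apply/negP => /(ccdf_tail1 P Y B mB mY PB) [y].
    by rewrite leNgt H.
  rewrite p1' mul1r; congr (fine (P _)).
  by apply/seteqP; split => w /=; [case | move=> Bw; split => //; rewrite leey].
- have H := @quantile_Ny _ _ _ (ccdf_mono P Y B mB mY) E.
  have [y] := ccdf_tail0 P Y B mB mY PB p p0.
  by rewrite ltNge H.
Qed.

Lemma point0 (Y : T -> R) B r : measurable B -> measurable_fun setT Y ->
  0 < fine (P B) -> continuous (Defs.ccdf P Y B) ->
  fine (P (([set w | Y w <= r] `&` B) `&` [set w | r <= Y w])) = 0.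
Proof.
move=> mB mY PB cF.
set X := [set w | Y w <= r] `&` B.
have mX : measurable X by apply: measurableI => //; exact: mleR.
apply/eqP; rewrite eq_le m_ge0 andbT leNgt; apply/negP => m0.
have e0 : 0 < fine (P (X `&` [set w | r <= Y w])) / fine (P B) by rewrite divr_gt0.
have [del del0 Hd] := @cont_delta _ (Defs.ccdf P Y B) r _ cF e0.
set y := r - del / 2.
set Z := [set w | Y w <= y] `&` B.
have mZ : measurable Z by apply: measurableI => //; exact: mleR.
have h := mD P mX mZ.
have XZ : X `&` Z = Z.
  apply/seteqP; split => w; first by case.
  move=> [/= h1 h2]; split => //; split => //=; apply: le_trans h1 _.
  rewrite /y; lra.
rewrite XZ in h.
have sub : fine (P (X `&` [set w | r <= Y w])) <= fine (P (X `\` Z)).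
  apply: m_le.
  - by apply: measurableI => //; exact: mgeR.
  - exact: measurableD.
  move=> w [[/= h1 h2] /= h3]; split; first by split.
  move=> [/= h4 _]; have : r <= y by apply: le_trans h3 h4.
  rewrite /y; lra.
have := Hd y.
have -> : `|r - y| < del by rewrite /y opprB addrC subrK ger0_norm; lra.
move=> /(_ isT).
rewrite ltr_pdivlMr //.
have eX := ccdfE Y B r PB; have eZ := ccdfE Y B y PB.
rewrite -/X in eX; rewrite -/Z in eZ.
move=> hh.
have := ler_norm (Defs.ccdf P Y B r - Defs.ccdf P Y B y).
have := m_ge0 P B.
nra.
Qed.

Lemma QU (Y : T -> R) B p : measurable B -> measurable_fun setT Y ->
  0 < fine (P B) -> continuous (Defs.ccdf P Y B) -> 0 < p <= 1 ->
  fine (P (B `&` [set w | (quantile (Defs.ccdf P Y B) (1 - p) <= (Y w)%:E)%E]))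
  = p * fine (P B).
Proof.
move=> mB mY PB cF /andP[p0 p1].
case E: (quantile (Defs.ccdf P Y B) (1 - p)) => [r| |].
- have Fr := @quantile_fin _ _ _ _ cF E.
  set X := [set w | Y w <= r] `&` B.
  set C := [set w | r <= Y w].
  have mX : measurable X by apply: measurableI => //; exact: mleR.
  have mC : measurable C by exact: mgeR.
  have h1 := mD P mB mC.
  have h2 := mD P mX mC.
  have e1 : B `\` C = X `\` C.
    apply/seteqP; split => w.
    + move=> [Bw /= nC]; split => //; split => //=.
      by rewrite leNgt; apply/negP => /ltW.
    + by move=> [[_ Bw] nC].
  have h3 := point0 Y B r mB mY PB cF.
  have eX := ccdfE Y B r PB.
  rewrite -/X -/C in h3 eX.
  rewrite Fr in eX.
  rewrite -/C.
  rewrite e1 in h1.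
  nra.
- have H := @quantile_y _ _ _ E.
  have [y] := ccdf_tail1 P Y B mB mY PB (1 - p) ltac:(lra).
  by rewrite leNgt H.
- have H := @quantile_Ny _ _ _ (ccdf_mono P Y B mB mY) E.
  have p1' : p = 1.
    apply/eqP; rewrite eq_le p1 /= leNgt; apply/negP => pl1.
    have [y] := ccdf_tail0 P Y B mB mY PB (1 - p) ltac:(lra).
    by rewrite ltNge H.
  rewrite p1' mul1r; congr (fine (P _)).
  by apply/seteqP; split => w /=; [case | move=> Bw; split => //; rewrite leNye].
Qed.

End Aux5.

Section Aux6.
Context {R : realType} {d : measure_display} {T : measurableType d}.
Context (P : probability T R).

Lemma cexp_eq (f g : T -> R) D : (forall w, D w -> f w = g w) ->
  cexp P f D = cexp P g D.
Proof.
move=> fg; rewrite /cexp; congr (fine _ / _); apply: eq_integral => w /[!inE] Dw.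
by rewrite fg.
Qed.

Lemma cexpB (f g : T -> R) D : measurable D ->
  P.-integrable D (fun w => (f w)%:E) -> P.-integrable D (fun w => (g w)%:E) ->
  cexp P (fun w => f w - g w) D = cexp P f D - cexp P g D.
Proof.
move=> mD intf intg; rewrite /cexp -mulrBl; congr (_ / _).
rewrite -fineB; try exact: integrable_fin_num.
by rewrite -integralB.
Qed.

Lemma cexp_cst (c : R) D : measurable D -> 0 < fine (P D) ->
  cexp P (fun _ => c) D = c.
Proof.
move=> mD PD; rewrite /cexp (_ : (fun _ => c%:E) = cst c%:E) //.
rewrite integral_cst // fineM //=; last exact: Pfin.
by rewrite mulfK // gt_eqF.
Qed.

Lemma eqIS (A B : set T) : A `<=` B -> A `&` B = A.
Proof. by move=> AB; apply/seteqP; split => w; [case | move=> Aw; split => //; exact: AB]. Qed.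

Lemma lowtrim (Y : T -> R) B A (q : \bar R) : measurable B -> A `<=` B ->
  measurable A -> P.-integrable B (fun w => (Y w)%:E) -> measurable_fun setT Y ->
  P A = P (B `&` [set w | ((Y w)%:E <= q)%E]) ->
  cexp P Y (B `&` [set w | ((Y w)%:E <= q)%E]) <= cexp P Y A.
Proof.
move=> mB AB mA intY mY PAL.
apply: (@trim_cexp _ _ _ P Y B A _ q mB AB) => //.
- by apply: measurableI => //; exact: mle.
- by move=> w [].
- move=> w Aw nL; rewrite leNgt; apply/negP => /ltW h; apply: nL; split => //.
  exact: AB.
Qed.

Lemma uptrim (Y : T -> R) B A (q : \bar R) : measurable B -> A `<=` B ->
  measurable A -> P.-integrable B (fun w => (Y w)%:E) -> measurable_fun setT Y ->
  P A = P (B `&` [set w | (q <= (Y w)%:E)%E]) ->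
  cexp P Y A <= cexp P Y (B `&` [set w | (q <= (Y w)%:E)%E]).
Proof.
move=> mB AB mA intY mY PAL.
apply: (@trim_cexp _ _ _ P Y B _ A q mB) => //.
- by apply: measurableI => //; exact: mge.
- move=> w Aw nL; rewrite leNgt; apply/negP => /ltW h; apply: nL; split => //.
  exact: AB.
- by move=> w [].
Qed.

Lemma Peq A B : measurable A -> measurable B -> fine (P A) = fine (P B) -> P A = P B.
Proof. by move=> mA mB e; rewrite (PE P mA) (PE P mB) e. Qed.

End Aux6.

Section Main.
Context {R : realType} {d : measure_display} {T : measurableType d}.
Context (P : probability T R) (G S1 S20 S21 : set T) (Y1 Y20 Y21 : T -> R).
Context (mG : measurable G) (mS20 : measurable S20) (mS21 : measurable S21).
Context (mY1 : measurable_fun setT Y1) (mY20 : measurable_fun setT Y20)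
  (mY21 : measurable_fun setT Y21).

Lemma indG w : G w -> \1_G w = 1 :> R.
Proof. by move=> Gw; rewrite indicE mem_set. Qed.

Lemma indNG w : ~ G w -> \1_G w = 0 :> R.
Proof. by move=> Gw; rewrite indicE memNset. Qed.

Lemma mYdd : measurable_fun setT (Ydd G Y1 Y20 Y21).
Proof.
rewrite /Ydd /obsY2.
apply: (measurable_funB (f := fun w => \1_G w * Y21 w + (1 - \1_G w) * Y20 w)) => //.
apply: (measurable_funD (f := fun w => \1_G w * Y21 w)).
- by apply: measurable_funM => //; exact: measurable_indic.
- apply: (measurable_funM (f := fun w => 1 - \1_G w)) => //.
  apply: (measurable_funB (f := cst 1)); first exact: measurable_cst.
  exact: measurable_indic.
Qed.

Lemma YddG w : G w -> Ydd G Y1 Y20 Y21 w = Y21 w - Y1 w.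
Proof. by move=> Gw; rewrite /Ydd /obsY2 indG // subrr mul0r addr0 mul1r. Qed.

Lemma YddNG w : ~ G w -> Ydd G Y1 Y20 Y21 w = Y20 w - Y1 w.
Proof. by move=> Gw; rewrite /Ydd /obsY2 indNG // subr0 mul0r add0r mul1r. Qed.

Lemma B1E : obsS2 G S20 S21 `&` grp G true = G `&` S21.
Proof.
rewrite /obsS2 /=; apply/seteqP; split => w.
- by move=> [[[]|[]] //].
- by move=> [Gw Sw]; split => //; left.
Qed.

Lemma B0E : obsS2 G S20 S21 `&` grp G false = ~` G `&` S20.
Proof.
rewrite /obsS2 /=; apply/seteqP; split => w.
- by move=> [[[]|[]] //].
- by move=> [Gw Sw]; split => //; right.
Qed.

Lemma GS2 : G `&` obsS2 G S20 S21 = G `&` S21.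
Proof. by rewrite setIC (B1E). Qed.

Lemma NGS2 : ~` G `&` obsS2 G S20 S21 = ~` G `&` S20.
Proof. by rewrite setIC (B0E). Qed.

Lemma mA1 : measurable (G `&` AO S20 S21).
Proof. by apply: measurableI => //; apply: measurableI. Qed.

Lemma mA0 : measurable (~` G `&` AO S20 S21).
Proof. by apply: measurableI; [exact: measurableC | apply: measurableI]. Qed.

Lemma mB1 : measurable (obsS2 G S20 S21 `&` grp G true).
Proof. by rewrite B1E; apply: measurableI. Qed.

Lemma mB0 : measurable (obsS2 G S20 S21 `&` grp G false).
Proof. by rewrite B0E; apply: measurableI => //; exact: measurableC. Qed.

Lemma A1B1 : G `&` AO S20 S21 `<=` obsS2 G S20 S21 `&` grp G true.
Proof. by rewrite B1E => w [Gw [_ Sw]]. Qed.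

Lemma A0B0 : ~` G `&` AO S20 S21 `<=` obsS2 G S20 S21 `&` grp G false.
Proof. by rewrite B0E => w [Gw [Sw _]]. Qed.

Lemma PA1 : 0 < fine (P (obsS2 G S20 S21 `&` grp G true)) ->
  fine (P (G `&` AO S20 S21)) = pi1 P G S20 S21 * fine (P (obsS2 G S20 S21 `&` grp G true)).
Proof.
rewrite B1E => PB; rewrite /pi1 /cprob divfK ?gt_eqF //.
by rewrite /AO setICA.
Qed.

Lemma PA0 : 0 < fine (P (obsS2 G S20 S21 `&` grp G false)) ->
  fine (P (~` G `&` AO S20 S21)) = pi0 P G S20 S21 * fine (P (obsS2 G S20 S21 `&` grp G false)).
Proof.
rewrite B0E => PB; rewrite /pi0 /cprob divfK ?gt_eqF //.
by rewrite /AO (setIC S20) setICA.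
Qed.

Lemma ATTE :
  P.-integrable (G `&` AO S20 S21) (fun w => (Y20 w - Y1 w)%:E) ->
  cexp P (fun w => Y20 w - Y1 w) (G `&` AO S20 S21)
    = cexp P (fun w => Y20 w - Y1 w) (~` G `&` AO S20 S21) ->
  P.-integrable (obsS2 G S20 S21 `&` grp G true) (fun w => (Ydd G Y1 Y20 Y21 w)%:E) ->
  ATT_AO P G S20 S21 Y20 Y21 =
  cexp P (Ydd G Y1 Y20 Y21) (G `&` AO S20 S21) - cexp P (Ydd G Y1 Y20 Y21) (~` G `&` AO S20 S21).
Proof.
move=> iG ppt iB1; rewrite /ATT_AO.
rewrite (@cexp_eq _ _ _ _ _ (fun w => Ydd G Y1 Y20 Y21 w - (Y20 w - Y1 w))); last first.
  by move=> w [Gw _]; rewrite YddG //; ring.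
rewrite cexpB //; last 2 first.
- exact: mA1.
- apply: integrableS iB1 => //; [exact: mB1 | exact: mA1 | exact: A1B1].
rewrite ppt; congr (_ - _); apply: cexp_eq => w [Gw _]; by rewrite YddNG.
Qed.

Lemma bounds_main :
  P.-integrable (G `&` AO S20 S21) (fun w => (Y20 w - Y1 w)%:E) ->
  cexp P (fun w => Y20 w - Y1 w) (G `&` AO S20 S21)
    = cexp P (fun w => Y20 w - Y1 w) (~` G `&` AO S20 S21) ->
  (forall g : bool,
        [/\ 0 < fine (P (obsS2 G S20 S21 `&` grp G g)),
            continuous (Fdd P G S20 S21 Y1 Y20 Y21 g)
          & P.-integrable (obsS2 G S20 S21 `&` grp G g)
              (fun w => (Ydd G Y1 Y20 Y21 w)%:E)]) ->
  (0 < pi1 P G S20 S21 <= 1) /\ (0 < pi0 P G S20 S21 <= 1) ->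
  DeltaLB P G S20 S21 Y1 Y20 Y21 <= ATT_AO P G S20 S21 Y20 Y21
                                     <= DeltaUB P G S20 S21 Y1 Y20 Y21.
Proof.
move=> iG ppt hF [hp1 hp0].
have [PB1 cF1 iB1] := hF true; have [PB0 cF0 iB0] := hF false.
rewrite (ATTE iG ppt iB1) /DeltaLB /DeltaUB /=.
have e1 : G `&` obsS2 G S20 S21 = obsS2 G S20 S21 `&` grp G true by rewrite setIC.
have e0 : ~` G `&` obsS2 G S20 S21 = obsS2 G S20 S21 `&` grp G false by rewrite setIC.
rewrite e1 e0 /Fdd.
set Y := Ydd G Y1 Y20 Y21.
set B1 := obsS2 G S20 S21 `&` grp G true.
set B0 := obsS2 G S20 S21 `&` grp G false.
have l1 := @lowtrim _ _ _ P Y _ _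
  (quantile (Defs.ccdf P Y B1) (pi1 P G S20 S21)) mB1 A1B1 mA1 iB1 mYdd.
have u1 := @uptrim _ _ _ P Y _ _
  (quantile (Defs.ccdf P Y B1) (1 - pi1 P G S20 S21)) mB1 A1B1 mA1 iB1 mYdd.
have l0 := @lowtrim _ _ _ P Y _ _
  (quantile (Defs.ccdf P Y B0) (pi0 P G S20 S21)) mB0 A0B0 mA0 iB0 mYdd.
have u0 := @uptrim _ _ _ P Y _ _
  (quantile (Defs.ccdf P Y B0) (1 - pi0 P G S20 S21)) mB0 A0B0 mA0 iB0 mYdd.
have mmB1 := mB1; have mmB0 := mB0.
rewrite -/B1 -/B0 in mmB1 mmB0.
have pa1 := PA1 PB1; have pa0 := PA0 PB0.
rewrite -/B1 in pa1; rewrite -/B0 in pa0.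
have q1 := QL P Y B1 _ mmB1 mYdd PB1 cF1 hp1.
have q1' := QU P Y B1 _ mmB1 mYdd PB1 cF1 hp1.
have q0 := QL P Y B0 _ mmB0 mYdd PB0 cF0 hp0.
have q0' := QU P Y B0 _ mmB0 mYdd PB0 cF0 hp0.
have L1 := l1 (Peq P _ _ mA1 (measurableI _ _ mmB1 (mle _ _ mYdd)) (etrans pa1 (esym q1))).
have U1 := u1 (Peq P _ _ mA1 (measurableI _ _ mmB1 (mge _ _ mYdd)) (etrans pa1 (esym q1'))).
have L0 := l0 (Peq P _ _ mA0 (measurableI _ _ mmB0 (mle _ _ mYdd)) (etrans pa0 (esym q0))).
have U0 := u0 (Peq P _ _ mA0 (measurableI _ _ mmB0 (mge _ _ mYdd)) (etrans pa0 (esym q0'))).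
apply/andP; split; lra.
Qed.

Lemma sharp (L1 U0 : set T) :
  model_ok P G S1 S20 S21 Y1 Y20 Y21 ->
  measurable L1 -> L1 `<=` G `&` S21 ->
  fine (P L1) = pi1 P G S20 S21 * fine (P (G `&` S21)) ->
  measurable U0 -> U0 `<=` ~` G `&` S20 ->
  fine (P U0) = pi0 P G S20 S21 * fine (P (~` G `&` S20)) ->
  exists (S20' S21' : set T) (Y20' Y21' : T -> R),
    compatible P G S1 Y1 S20 S21 Y20 Y21 S20' S21' Y20' Y21' /\
    ATT_AO P G S20' S21' Y20' Y21' =
      cexp P (Ydd G Y1 Y20 Y21) L1 - cexp P (Ydd G Y1 Y20 Y21) U0.
Proof.
move=> [[[_ mS1 _ _] _] abs [iG iNG ppt] hF [hp1 hp0]] mL1 L1s PL1 mU0 U0s PU0.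
set Y := Ydd G Y1 Y20 Y21.
set c := cexp P Y U0.
have [PB1 cF1 iB1] := hF true; have [PB0 cF0 iB0] := hF false.
rewrite B1E in PB1 iB1; rewrite B0E in PB0 iB0.
pose S20' := L1 `|` (~` G `&` S20).
pose S21' := (G `&` S21) `|` U0.
pose Y20' := fun w => \1_G w * (Y1 w + c) + (1 - \1_G w) * Y20 w.
exists S20', S21', Y20', Y21.
have eS2 : obsS2 G S20' S21' = obsS2 G S20 S21.
  rewrite /obsS2 /S20' /S21'; apply/seteqP; split => w.
  - move=> [[Gw [[]|/U0s[]//]]|[nGw [/L1s[]//|[]]]]; by [left|right].
  - by move=> [[Gw S]|[nGw S]]; [left; split => //; left | right; split => //; right].
have eY2 : obsY2 G Y20' Y21 = obsY2 G Y20 Y21.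
  apply/funext => w; rewrite /obsY2 /Y20'.
  have [Gw|nGw] := pselect (G w).
  - by rewrite indG // subrr !mul0r.
  - by rewrite indNG // subr0 !mul0r !add0r !mul1r.
have eYdd : Ydd G Y1 Y20' Y21 = Y by rewrite /Y /Ydd eY2.
have eA1 : G `&` AO S20' S21' = L1.
  rewrite /AO /S20' /S21'; apply/seteqP; split => w.
  - by move=> [Gw [[//|[]//] _]].
  - by move=> Lw; have [Gw Sw] := L1s _ Lw; split => //; split; left.
have eA0 : ~` G `&` AO S20' S21' = U0.
  rewrite /AO /S20' /S21'; apply/seteqP; split => w.
  - by move=> [nGw [_ [[]//|//]]].
  - by move=> Uw; have [nGw Sw] := U0s _ Uw; split => //; split; right.
have epi1 : pi1 P G S20' S21' = pi1 P G S20 S21.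
  rewrite /pi1 /cprob.
  have -> : G `&` S21' = G `&` S21.
    rewrite /S21'; apply/seteqP; split => w.
    - by move=> [Gw [//|/U0s[]//]].
    - by move=> [Gw Sw]; split => //; left.
  have -> : S20' `&` (G `&` S21) = L1.
    rewrite /S20'; apply/seteqP; split => w.
    - by move=> [[Lw|[nGw _]] [Gw _]].
    - by move=> Lw; split; [left | exact: L1s].
  by rewrite PL1 mulfK // gt_eqF.
have epi0 : pi0 P G S20' S21' = pi0 P G S20 S21.
  rewrite /pi0 /cprob.
  have -> : ~` G `&` S20' = ~` G `&` S20.
    rewrite /S20'; apply/seteqP; split => w.
    - by move=> [nGw [/L1s[]//|//]].
    - by move=> [nGw Sw]; split => //; right.
  have -> : S21' `&` (~` G `&` S20) = U0.
    rewrite /S21'; apply/seteqP; split => w.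
    - by move=> [[[Gw _]|Uw] [nGw _]].
    - by move=> Uw; split; [right | exact: U0s].
  by rewrite PU0 mulfK // gt_eqF.
have PL1pos : 0 < fine (P L1).
  by rewrite PL1 mulr_gt0 //; case/andP: hp1.
have mU0B0 : U0 `<=` ~` G `&` S20 := U0s.
have iU0 : P.-integrable U0 (fun w => (Y w)%:E).
  apply: integrableS iB0 => //; apply: measurableI => //; exact: measurableC.
have iL1 : P.-integrable L1 (fun w => (Y w)%:E).
  by apply: integrableS iB1 => //; apply: measurableI.
have icst : P.-integrable L1 (fun w => c%:E) by exact: finite_measure_integrable_cst.
have L1G : forall w, L1 w -> G w by move=> w /L1s[].
have U0G : forall w, U0 w -> ~ G w by move=> w /U0s[].
have Y20'L : forall w, L1 w -> Y20' w - Y1 w = c.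
  by move=> w /L1G Gw; rewrite /Y20' indG // subrr mul0r addr0 mul1r addrC addKr.
have Y20'U : forall w, U0 w -> Y20' w - Y1 w = Y w.
  by move=> w /U0G Gw; rewrite /Y20' indNG // subr0 mul0r add0r mul1r /Y YddNG.
split; last first.
  rewrite /ATT_AO eA1.
  rewrite (@cexp_eq _ _ _ _ _ (fun w => Y w - c)); last first.
    move=> w Lw /=; have h := Y20'L w Lw; rewrite /Y YddG; last exact: L1G.
    by rewrite -h; ring.
  by rewrite cexpB // cexp_cst.
rewrite /compatible; split => //.
have mNG : measurable (~` G) by exact: measurableC.
split.
- split; split => //.
  + by apply: measurableU => //; apply: measurableI.
  + by apply: measurableU => //; apply: measurableI.
  + rewrite /Y20'.
    apply: (measurable_funD (f := fun w => \1_G w * (Y1 w + c))).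
    * apply: measurable_funM; first exact: measurable_indic.
      by apply: (measurable_funD (f := Y1)) => //; exact: measurable_cst.
    * apply: (measurable_funM (f := fun w => 1 - \1_G w)) => //.
      apply: (measurable_funB (f := cst 1)); first exact: measurable_cst.
      exact: measurable_indic.
- move=> w nS1; have [n20 n21] := abs w nS1; split.
  + by move=> [/L1s[_ Sw]|[_ Sw]].
  + by move=> [[_ Sw]|/U0s[_ Sw]].
- rewrite eA1 eA0; split.
  + apply: (eq_integrable mL1 (fun _ => c%:E)) => //.
    by move=> w /[!inE] Lw; rewrite Y20'L.
  + apply: (eq_integrable mU0 (fun w => (Y w)%:E)) => //.
    by move=> w /[!inE] Uw; rewrite Y20'U.
  + rewrite (@cexp_eq _ _ _ _ _ (fun _ => c)); last exact: Y20'L.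
    rewrite (@cexp_eq _ _ _ _ _ Y U0); last exact: Y20'U.
    by rewrite cexp_cst.
- by move=> g; rewrite /Fdd eS2 eYdd; exact: hF g.
- by rewrite epi1 epi0.
Qed.

End Main.

Theorem proposition1 (R : realType) (d : measure_display) (T : measurableType d)
    (P : probability T R) (G S1 S20 S21 : set T) (Y1 Y20 Y21 : T -> R) :
  model_ok P G S1 S20 S21 Y1 Y20 Y21 ->
  [/\ DeltaLB P G S20 S21 Y1 Y20 Y21 <= ATT_AO P G S20 S21 Y20 Y21
                                     <= DeltaUB P G S20 S21 Y1 Y20 Y21,
      (exists (S20' S21' : set T) (Y20' Y21' : T -> R),
          compatible P G S1 Y1 S20 S21 Y20 Y21 S20' S21' Y20' Y21' /\
          ATT_AO P G S20' S21' Y20' Y21' = DeltaLB P G S20 S21 Y1 Y20 Y21)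
    & (exists (S20' S21' : set T) (Y20' Y21' : T -> R),
          compatible P G S1 Y1 S20 S21 Y20 Y21 S20' S21' Y20' Y21' /\
          ATT_AO P G S20' S21' Y20' Y21' = DeltaUB P G S20 S21 Y1 Y20 Y21)].
Proof.
move=> mok; have mok' := mok.
case: mok => [[[mG mS1 mS20 mS21] [mY1 mY20 mY21]] abs [iG iNG ppt] hF [hp1 hp0]].
have [PB1 cF1 iB1] := hF true; have [PB0 cF0 iB0] := hF false.
have mY := mYdd _ _ _ _ mG mY1 mY20 mY21.
have mmB1 := mB1 G S20 S21 mG mS21; have mmB0 := mB0 G S20 S21 mG mS20.
have e1 : G `&` obsS2 G S20 S21 = obsS2 G S20 S21 `&` grp G true by rewrite setIC.
have e0 : ~` G `&` obsS2 G S20 S21 = obsS2 G S20 S21 `&` grp G false by rewrite setIC.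
split.
- exact: (bounds_main _ _ _ _ _ _ _ mG mS20 mS21 mY1 mY20 mY21 iG ppt hF (conj hp1 hp0)).
- rewrite /DeltaLB /= e1 e0 /Fdd.
  have [S20' [S21' [Y20' [Y21' [hc hatt]]]]] :=
    sharp P G S1 S20 S21 Y1 Y20 Y21 mG mS20 mS21 mY1 mY20 mY21 _ _ mok'
      (measurableI _ _ mmB1 (mle _ _ mY))
      (fun w (h : (_ `&` _) w) => eq_ind _ (fun X => X w) (proj1 h) _ (B1E G S20 S21))
      (etrans (QL P _ _ _ mmB1 mY PB1 cF1 hp1) (congr1 (fun X => _ * fine (P X)) (B1E G S20 S21)))
      (measurableI _ _ mmB0 (mge _ _ mY))
      (fun w (h : (_ `&` _) w) => eq_ind _ (fun X => X w) (proj1 h) _ (B0E G S20 S21))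
      (etrans (QU P _ _ _ mmB0 mY PB0 cF0 hp0) (congr1 (fun X => _ * fine (P X)) (B0E G S20 S21))).
  by exists S20', S21', Y20', Y21'.
- rewrite /DeltaUB /= e1 e0 /Fdd.
  have [S20' [S21' [Y20' [Y21' [hc hatt]]]]] :=
    sharp P G S1 S20 S21 Y1 Y20 Y21 mG mS20 mS21 mY1 mY20 mY21 _ _ mok'
      (measurableI _ _ mmB1 (mge _ _ mY))
      (fun w (h : (_ `&` _) w) => eq_ind _ (fun X => X w) (proj1 h) _ (B1E G S20 S21))
      (etrans (QU P _ _ _ mmB1 mY PB1 cF1 hp1) (congr1 (fun X => _ * fine (P X)) (B1E G S20 S21)))
      (measurableI _ _ mmB0 (mle _ _ mY))
      (fun w (h : (_ `&` _) w) => eq_ind _ (fun X => X w) (proj1 h) _ (B0E G S20 S21))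
      (etrans (QL P _ _ _ mmB0 mY PB0 cF0 hp0) (congr1 (fun X => _ * fine (P X)) (B0E G S20 S21))).
  by exists S20', S21', Y20', Y21'.
Qed.
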